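(* Let $(E,\le,\mathrm{Con})$ be a prime event structure and $\mathcal A$ its family of configurations. If $(R,\le_R),\rho$ is an extremal realisation of $\mathcal A$, then $\rho:R\to E$ is injective, its image $\rho R$ is a configuration of $E$, and for all $r,r'\in R$, $r\le_R r'$ iff $\rho(r)\le\rho(r')$.
   Context: A (prime) event structure $(E,\le,\mathrm{Con})$: set $E$, partial order $\le$ with $\{e'\mid e'\le e\}$ finite for all $e$, a nonempty family $\mathrm{Con}$ of finite subsets closed under subsets, containing all singletons, and such that $X\in\mathrm{Con}$ and $e\le e'\in X$ imply $X\cup\{e\}\in\mathrm{Con}$. A configuration is a (possibly infinite) down-closed subset all of whose finite subsets are in $\mathrm{Con}$. A (causal) realisation of a family $\mathcal A$ with $A=\bigcup\mathcal A$ is a partial order $(R,\le_R)$ with finite down-sets and a function $\rho:R\to A$ such that $\rho x\in\mathcal A$ for every down-closed $x\subseteq R$. A map of realisations is a partial surjective function between carriers which sends down-closed subsets to down-closed subsets and commutes with the functions to $A$ where defined; it is total if the function is total. A realisation is extremal if every total map of realisations out of it is an isomorphism of realisations. *)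

(* Defs.v *)
From Stdlib Require Import List.
Set Implicit Arguments.

Definition finite_set {X : Type} (S : X -> Prop) : Prop :=
  exists l : list X, forall x, S x -> In x l.

Definition subset {X : Type} (S T : X -> Prop) : Prop := forall x, S x -> T x.

Definition finitary_partial_order {X : Type} (le : X -> X -> Prop) : Prop :=
  (forall x, le x x) /\
  (forall x y, le x y -> le y x -> x = y) /\
  (forall x y z, le x y -> le y z -> le x z) /\
  (forall x, finite_set (fun y => le y x)).

Definition event_structure {E : Type} (le : E -> E -> Prop)
    (Con : (E -> Prop) -> Prop) : Prop :=
  finitary_partial_order le /\
  (forall X, Con X -> finite_set X) /\
  (exists X, Con X) /\
  (forall X Y, Con X -> subset Y X -> Con Y) /\
  (forall e, Con (fun e' => e' = e)) /\
  (forall X e e', Con X -> X e' -> le e e' -> Con (fun a => X a \/ a = e)).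

Definition down_closed {X : Type} (le : X -> X -> Prop) (S : X -> Prop) : Prop :=
  forall x y, S y -> le x y -> S x.

Definition configuration {E : Type} (le : E -> E -> Prop)
    (Con : (E -> Prop) -> Prop) (x : E -> Prop) : Prop :=
  down_closed le x /\
  (forall Y, subset Y x -> finite_set Y -> Con Y).

Definition image {R A : Type} (rho : R -> A) (x : R -> Prop) : A -> Prop :=
  fun a => exists r, x r /\ rho r = a.

Definition realisation {A : Type} (F : (A -> Prop) -> Prop)
    {R : Type} (leR : R -> R -> Prop) (rho : R -> A) : Prop :=
  finitary_partial_order leR /\
  (forall x : R -> Prop, down_closed leR x -> F (image rho x)).

Definition pimage {R1 R2 : Type} (f : R1 -> option R2) (x : R1 -> Prop) : R2 -> Prop :=
  fun r2 => exists r1, x r1 /\ f r1 = Some r2.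

Definition realisation_map {A R1 R2 : Type}
    (le1 : R1 -> R1 -> Prop) (rho1 : R1 -> A)
    (le2 : R2 -> R2 -> Prop) (rho2 : R2 -> A)
    (f : R1 -> option R2) : Prop :=
  (forall r2, exists r1, f r1 = Some r2) /\
  (forall x, down_closed le1 x -> down_closed le2 (pimage f x)) /\
  (forall r1 r2, f r1 = Some r2 -> rho2 r2 = rho1 r1).

Definition total_pfun {R1 R2 : Type} (f : R1 -> option R2) : Prop :=
  forall r1, exists r2, f r1 = Some r2.

Definition realisation_iso {A R1 R2 : Type}
    (le1 : R1 -> R1 -> Prop) (rho1 : R1 -> A)
    (le2 : R2 -> R2 -> Prop) (rho2 : R2 -> A)
    (f : R1 -> option R2) : Prop :=
  realisation_map le1 rho1 le2 rho2 f /\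
  exists g : R2 -> option R1,
    realisation_map le2 rho2 le1 rho1 g /\
    total_pfun f /\ total_pfun g /\
    (forall r1 r2, f r1 = Some r2 <-> g r2 = Some r1).

Definition extremal {A : Type} (F : (A -> Prop) -> Prop)
    {R : Type} (leR : R -> R -> Prop) (rho : R -> A) : Prop :=
  realisation F leR rho /\
  forall (R' : Type) (leR' : R' -> R' -> Prop) (rho' : R' -> A)
         (f : R -> option R'),
    realisation F leR' rho' ->
    realisation_map leR rho leR' rho' f ->
    total_pfun f ->
    realisation_iso leR rho leR' rho' f.

(* Main.v *)
Require Import Defs.
From Stdlib Require Import List.
From Stdlib Require Import ClassicalEpsilon ProofIrrelevance.

Theorem mainTheorem5 (E : Type) (le : E -> E -> Prop) (Con : (E -> Prop) -> Prop)
  (R : Type) (leR : R -> R -> Prop) (rho : R -> E) :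
  event_structure le Con ->
  extremal (configuration le Con) leR rho ->
  (forall r r', rho r = rho r' -> r = r') /\
  configuration le Con (fun e => exists r, rho r = e) /\
  (forall r r', leR r r' <-> le (rho r) (rho r')).
Proof.
  intros HE [[HpoR Himg] Hext].
  destruct HE as [[Hrefl [Hanti [Htrans Hfin]]] _].
  assert (Hall : configuration le Con (fun e => exists r, rho r = e)).
  { destruct (Himg (fun _ => True)) as [Hd Hc].
    { intros x y _ _; exact I. }
    split.
    - intros x y [r Hr] Hxy. destruct (Hd x y) as [r' [_ Hr']]; [exists r; split; auto | exact Hxy | exists r'; exact Hr'].
    - intros Y HY HfY. apply Hc; auto.
      intros e He. destruct (HY e He) as [r Hr]; exists r; auto. }
  set (P := fun e => exists r, rho r = e).
  set (leR' := fun p q : sig P => le (proj1_sig p) (proj1_sig q)).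
  set (rho' := fun p : sig P => proj1_sig p).
  set (f := fun r => Some (exist P (rho r) (ex_intro _ r eq_refl)) : option (sig P)).
  assert (Hreal' : realisation (configuration le Con) leR' rho').
  { split.
    - split; [|split; [|split]].
      + intros x; apply Hrefl.
      + intros [a ha] [b hb] H1 H2. unfold leR' in *; simpl in *.
        assert (a = b) by auto. subst. f_equal. apply proof_irrelevance.
      + intros x y z; unfold leR'; eauto.
      + intros [e0 h0]. destruct (Hfin e0) as [l Hl].
        exists (flat_map (fun e => match excluded_middle_informative (P e) with
                                   | left h => exist P e h :: nil
                                   | right _ => nil end) l).
        intros [e h] He. apply in_flat_map. exists e. split.
        * apply Hl. exact He.
        * destruct (excluded_middle_informative (P e)) as [h'|n].
          -- left. f_equal. apply proof_irrelevance.
          -- contradiction.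
    - intros x Hx. destruct Hall as [Hd Hc]. split.
      + intros e e0 [p [Hp Hpe]] Hle. subst e0.
        assert (Pe : P e). { apply (Hd e (rho' p)); auto. destruct p; auto. }
        exists (exist P e Pe). split; auto.
        apply (Hx _ p Hp). exact Hle.
      + intros Y HY HfY. apply Hc; auto.
        intros e He. destruct (HY e He) as [p [_ Hp]]. subst e. destruct p; auto. }
  assert (Hmap : realisation_map leR rho leR' rho' f).
  { split; [|split].
    - intros [e [r Hr]]. exists r. subst e. reflexivity.
    - intros x Hx. destruct (Himg x Hx) as [Hd _].
      intros p q [r [Hr Hfr]] Hle. injection Hfr as Hfr. subst q.
      unfold leR' in Hle; simpl in Hle.
      destruct (Hd (proj1_sig p) (rho r)) as [r' [Hr' Hr'e]].
      + exists r; auto.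
      + exact Hle.
      + exists r'. split; auto. unfold f. f_equal. destruct p as [e h]. simpl in *.
        subst e. f_equal. apply proof_irrelevance.
    - intros r1 r2 H. injection H as H. subst r2. reflexivity. }
  assert (Htot : total_pfun f). { intros r; eexists; reflexivity. }
  destruct (Hext _ leR' rho' f Hreal' Hmap Htot) as [_ [g [Hg [_ [_ Hfg]]]]].
  assert (Hinj : forall r r', rho r = rho r' -> r = r').
  { intros r r' H.
    assert (E1 : g (exist P (rho r) (ex_intro _ r eq_refl)) = Some r) by (apply Hfg; reflexivity).
    assert (E2 : g (exist P (rho r) (ex_intro _ r eq_refl)) = Some r').
    { apply Hfg. unfold f. f_equal. apply subset_eq_compat. symmetry; exact H. }
    rewrite E1 in E2. injection E2; auto. }
  split; [exact Hinj|split; [exact Hall|]].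
  intros r r'. split.
  - intros H.
    destruct Hg as [_ [Hgd _]].
    set (x := fun p : sig P => le (proj1_sig p) (rho r')).
    assert (Hx : down_closed leR' x).
    { intros p q Hq Hpq. unfold x, leR' in *. eauto. }
    assert (Hin : pimage g x r').
    { exists (exist P (rho r') (ex_intro _ r' eq_refl)). split.
      - unfold x; simpl; apply Hrefl.
      - apply Hfg; reflexivity. }
    destruct (Hgd x Hx r r' Hin H) as [p [Hp Hgp]].
    apply Hfg in Hgp. unfold f in Hgp. injection Hgp as Hgp. subst p. exact Hp.
  - intros H.
    set (x := fun s => leR s r').
    assert (Hx : down_closed leR x).
    { intros a b Hb Hab. unfold x in *. destruct HpoR as [_ [_ [Ht _]]]. eauto. }
    destruct (Himg x Hx) as [Hd _].
    destruct (Hd (rho r) (rho r')) as [s [Hs Hse]].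
    + exists r'. split; auto. unfold x. destruct HpoR as [Hr _]. apply Hr.
    + exact H.
    + apply Hinj in Hse. subst s. exact Hs.
Qed.
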